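(* Fix a reflection matrix $\mathbf\Phi$ and let $(\{\mathbf W_k^{\star\star}\}_{k\in\mathcal K},\mathbf R_0^{\star\star},u^{\star\star})$ be an optimal solution of problem (SDR4.2). Define, for each $k\in\mathcal K$, $$\mathbf w_k^{\mathrm{opt,II}}=(\mathbf h_k^H\mathbf W_k^{\star\star}\mathbf h_k)^{-1/2}\,\mathbf W_k^{\star\star}\mathbf h_k,\qquad \mathbf R_0^{\mathrm{opt,II}}=\mathbf R_0^{\star\star}+\sum_{k\in\mathcal K}\mathbf W_k^{\star\star}-\sum_{k\in\mathcal K}\mathbf w_k^{\mathrm{opt,II}}(\mathbf w_k^{\mathrm{opt,II}})^H .$$ Then these are well defined, $\mathbf R_0^{\mathrm{opt,II}}\succeq\mathbf 0$, and $(\{\mathbf w_k^{\mathrm{opt,II}}\},\mathbf R_0^{\mathrm{opt,II}},u^{\star\star})$ is an optimal solution of problem (P4.2). In particular (P4.2) and (SDR4.2) have the same optimal value.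
   Context: Let $M,N,K\ge1$ be integers and $\mathcal K=\{1,\dots,K\}$. Fixed data: $\mathbf G\in\mathbb C^{N\times M}$, $\mathbf h_{\mathrm d,k}\in\mathbb C^{M}$, $\mathbf h_{\mathrm r,k}\in\mathbb C^{N}$ ($k\in\mathcal K$), thresholds $\Gamma_k>0$, noise powers $\sigma_k^2>0$, power budget $P_0>0$, an angle $\theta$, spacing $d>0$ and wavelength $\lambda>0$. A reflection matrix is $\mathbf\Phi=\mathrm{diag}(\mathbf v)$, $\mathbf v\in\mathbb C^N$, $|v_n|=1$. For given $\mathbf\Phi$: $\mathbf h_k=\mathbf h_{\mathrm d,k}+\mathbf G^H\mathbf\Phi^H\mathbf h_{\mathrm r,k}$, $\mathbf H_k=\mathbf h_k\mathbf h_k^H$. Let $\mathbf a(\theta)\in\mathbb C^N$ have entries $e^{j2\pi (n-1)d\sin\theta/\lambda}$, $n=1,\dots,N$, and $\dot{\mathbf a}(\theta)$ its derivative in $\theta$; put $\mathbf b=\mathbf G^T\mathbf\Phi^T\mathbf a(\theta)$, $\dot{\mathbf b}=\mathbf G^T\mathbf\Phi^T\dot{\mathbf a}(\theta)$, $\mathbf B=\mathbf b\mathbf b^T$, $\dot{\mathbf B}=\dot{\mathbf b}\mathbf b^T+\mathbf b\dot{\mathbf b}^T$. For Hermitian $\mathbf R$ and $u\in\mathbb R$ let $$\mathcal M(\mathbf R,u)=\begin{bmatrix}\mathrm{tr}(\dot{\mathbf B}\mathbf R\dot{\mathbf B}^H)-u & \mathrm{tr}(\mathbf B\mathbf R\dot{\mathbf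 B}^H)\\ \mathrm{tr}(\dot{\mathbf B}\mathbf R\mathbf B^H) & \mathrm{tr}(\mathbf B\mathbf R\mathbf B^H)\end{bmatrix}.$$ Type-II SINR: $\gamma_k^{\mathrm{II}}=|\mathbf h_k^H\mathbf w_k|^2/(\sum_{i\ne k}|\mathbf h_k^H\mathbf w_i|^2+\sigma_k^2)$. Problem (P4.2) (fixed $\mathbf\Phi$): maximize $u$ over $\mathbf w_k\in\mathbb C^M$, Hermitian $\mathbf R_0\succeq\mathbf 0$, $u\in\mathbb R$, subject to $\mathcal M(\sum_k\mathbf w_k\mathbf w_k^H+\mathbf R_0,u)\succeq\mathbf 0$, $\gamma_k^{\mathrm{II}}\ge\Gamma_k$ for all $k$, and $\sum_k\|\mathbf w_k\|^2+\mathrm{tr}(\mathbf R_0)\le P_0$. Problem (SDR4.2) (fixed $\mathbf\Phi$): maximize $u$ over Hermitian $\mathbf W_k\succeq\mathbf 0$, $\mathbf R_0\succeq\mathbf 0$, $u\in\mathbb R$, subject to $\mathcal M(\sum_k\mathbf W_k+\mathbf R_0,u)\succeq\mathbf 0$, $\tfrac1{\Gamma_k}\mathrm{tr}(\mathbf H_k\mathbf W_k)-\sum_{i\ne k}\mathrm{tr}(\mathbf H_k\mathbf W_i)\ge\sigma_k^2$ for all $k$, and $\sum_k\mathrm{tr}(\mathbf W_k)+\mathrm{tr}(\mathbf R_0)\le P_0$. *)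

(* Defs.v *)
From HB Require Import structures.
From mathcomp Require Import all_boot all_order all_algebra.
From mathcomp Require Import complex.
From mathcomp Require Import reals trigo.
Set Implicit Arguments. Unset Strict Implicit. Unset Printing Implicit Defensive.
Import Order.TTheory GRing.Theory Num.Theory.
Local Open Scope ring_scope.
Local Open Scope complex_scope.

Section Defs.
Variable R : realType.
Local Notation C := R[i].

Definition hadj m n (A : 'M[C]_(m, n)) : 'M[C]_(n, m) := (map_mx conjc A)^T.

(* Hermitian positive semidefinite: A = A^H and x^H A x >= 0 for all x
   (order on C: 0 <= z iff z is real and nonnegative) *)
Definition psd n (A : 'M[C]_n) : Prop :=
  A = hadj A /\ forall x : 'cV[C]_n, 0 <= (hadj x *m A *m x) 0 0.

Definition hermitian n (A : 'M[C]_n) : Prop := A = hadj A.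

Definition expj (x : R) : C := (cos x) +i* (sin x).

(* steering vector a(theta), entries e^{j 2 pi (n-1) d sin(theta)/lambda}, n = 1..N
   (0-based index i = n-1) *)
Definition steer (N : nat) (d lam theta : R) : 'cV[C]_N :=
  \col_(i < N) expj (2 * pi * i%:R * d * sin theta / lam).

(* its derivative in theta (computed entrywise):
   j 2 pi (n-1) d cos(theta)/lambda * e^{j 2 pi (n-1) d sin(theta)/lambda} *)
Definition steer_dot (N : nat) (d lam theta : R) : 'cV[C]_N :=
  \col_(i < N) ('i * (2 * pi * i%:R * d * cos theta / lam)%:C
                   * expj (2 * pi * i%:R * d * sin theta / lam)).

Variables (M N K : nat).
Variables (G : 'M[C]_(N, M)) (hd : 'I_K -> 'cV[C]_M) (hr : 'I_K -> 'cV[C]_N).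
Variables (Gam sig2 : 'I_K -> R) (P0 theta d lam : R).
Variable v : 'cV[C]_N.

Definition Phi : 'M[C]_N := diag_mx v^T.

Definition hk (k : 'I_K) : 'cV[C]_M := hd k + hadj G *m hadj Phi *m hr k.
Definition Hk (k : 'I_K) : 'M[C]_M := hk k *m hadj (hk k).

Definition bv : 'cV[C]_M := G^T *m Phi^T *m steer N d lam theta.
Definition bdot : 'cV[C]_M := G^T *m Phi^T *m steer_dot N d lam theta.
Definition Bm : 'M[C]_M := bv *m bv^T.
Definition Bdot : 'M[C]_M := bdot *m bv^T + bv *m bdot^T.

Definition Mmat (Rx : 'M[C]_M) (u : R) : 'M[C]_2 :=
  \matrix_(i < 2, j < 2)
    if (i == 0) && (j == 0) then \tr (Bdot *m Rx *m hadj Bdot) - u%:C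
    else if (i == 0) then \tr (Bm *m Rx *m hadj Bdot)
    else if (j == 0) then \tr (Bdot *m Rx *m hadj Bm)
    else \tr (Bm *m Rx *m hadj Bm).

Definition cnorm2 m (x : 'cV[C]_m) : C := (hadj x *m x) 0 0.

Definition gain (k : 'I_K) (w : 'cV[C]_M) : C := `|(hadj (hk k) *m w) 0 0| ^+ 2.

Definition sinrII (w : 'I_K -> 'cV[C]_M) (k : 'I_K) : C :=
  gain k (w k) / (\sum_(i < K | i != k) gain k (w i) + (sig2 k)%:C).

Definition feasP42 (w : 'I_K -> 'cV[C]_M) (R0 : 'M[C]_M) (u : R) : Prop :=
  psd R0 /\
  psd (Mmat (\sum_(k < K) w k *m hadj (w k) + R0) u) /\
  (forall k, (Gam k)%:C <= sinrII w k) /\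
  \sum_(k < K) cnorm2 (w k) + \tr R0 <= P0%:C.

Definition optP42 (w : 'I_K -> 'cV[C]_M) (R0 : 'M[C]_M) (u : R) : Prop :=
  feasP42 w R0 u /\ forall w' R0' u', feasP42 w' R0' u' -> u' <= u.

Definition feasSDR (W : 'I_K -> 'M[C]_M) (R0 : 'M[C]_M) (u : R) : Prop :=
  (forall k, psd (W k)) /\ psd R0 /\
  psd (Mmat (\sum_(k < K) W k + R0) u) /\
  (forall k, (Gam k)^-1%:C * \tr (Hk k *m W k)
               - \sum_(i < K | i != k) \tr (Hk k *m W i) >= (sig2 k)%:C) /\
  \sum_(k < K) \tr (W k) + \tr R0 <= P0%:C.

Definition optSDR (W : 'I_K -> 'M[C]_M) (R0 : 'M[C]_M) (u : R) : Prop :=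
  feasSDR W R0 u /\ forall W' R0' u', feasSDR W' R0' u' -> u' <= u.

Definition hWh (W : 'I_K -> 'M[C]_M) (k : 'I_K) : C :=
  (hadj (hk k) *m W k *m hk k) 0 0.

Definition wopt (W : 'I_K -> 'M[C]_M) (k : 'I_K) : 'cV[C]_M :=
  (sqrtC (hWh W k))^-1 *: (W k *m hk k).

Definition R0opt (W : 'I_K -> 'M[C]_M) (R0 : 'M[C]_M) : 'M[C]_M :=
  R0 + \sum_(k < K) W k - \sum_(k < K) wopt W k *m hadj (wopt W k).

End Defs.

(* Main.v *)
Require Import Defs.
From HB Require Import structures.
From mathcomp Require Import all_boot all_order all_algebra.
From mathcomp Require Import complex.
From mathcomp Require Import reals trigo.
Import Order.TTheory GRing.Theory Num.Theory.
Local Open Scope ring_scope.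
Local Open Scope complex_scope.
From mathcomp Require Import ring.
Set Implicit Arguments. Unset Strict Implicit. Unset Printing Implicit Defensive.

Section Help.
Variable R : realType.
Local Notation C := R[i].

Lemma hadjE m n (A : 'M[C]_(m,n)) i j : hadj A i j = conjc (A j i).
Proof. by rewrite !mxE. Qed.

Lemma hadjM m n p (A : 'M[C]_(m,n)) (B : 'M[C]_(n,p)) : hadj (A *m B) = hadj B *m hadj A.
Proof. by rewrite /hadj map_mxM trmx_mul. Qed.

Lemma hadjK m n (A : 'M[C]_(m,n)) : hadj (hadj A) = A.
Proof. by apply/matrixP => i j; rewrite !hadjE conjcK. Qed.

Lemma hadjD m n (A B : 'M[C]_(m,n)) : hadj (A + B) = hadj A + hadj B.
Proof. by apply/matrixP => i j; rewrite !(hadjE, mxE) rmorphD. Qed.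

Lemma hadjB m n (A B : 'M[C]_(m,n)) : hadj (A - B) = hadj A - hadj B.
Proof. by apply/matrixP => i j; rewrite !(hadjE, mxE) rmorphB. Qed.

Lemma hadjZ m n a (A : 'M[C]_(m,n)) : hadj (a *: A) = conjc a *: hadj A.
Proof. by apply/matrixP => i j; rewrite !(hadjE, mxE) rmorphM. Qed.

Lemma hadj_sum m n K (F : 'I_K -> 'M[C]_(m,n)) : hadj (\sum_k F k) = \sum_k hadj (F k).
Proof. by apply/matrixP => i j; rewrite hadjE !summxE rmorph_sum; apply: eq_bigr => k _; rewrite hadjE. Qed.

Definition qf n (W : 'M[C]_n) (x y : 'cV[C]_n) : C := (hadj x *m W *m y) 0 0.

Lemma mx11M n (A : 'M[C]_(1,n)) (B : 'M[C]_(n,1)) (Z : 'M[C]_1) : 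
  (Z *m (A *m B)) 0 0 = Z 0 0 * (A *m B) 0 0.
Proof. by rewrite mxE big_ord1. Qed.

Lemma conj_ge0 (z : C) : 0 <= z -> conjc z = z.
Proof. by move/ger0_Im; case: z => a b /= ->; rewrite oppr0. Qed.

Lemma formJ n (W : 'M[C]_n) (x y : 'cV[C]_n) : W = hadj W -> conjc (qf W x y) = qf W y x.
Proof.
move=> HW; rewrite /qf -hadjE !hadjM hadjK -HW.
by rewrite mulmxA.
Qed.

Lemma outer_form n (w x : 'cV[C]_n) :
  qf (w *m hadj w) x x = `|(hadj x *m w) 0 0| ^+ 2.
Proof.
rewrite /qf sqr_normc mulmxA -(mulmxA _ (hadj w)) mx11M.
by rewrite -[hadj w *m x]hadjK hadjM hadjK hadjE.
Qed.

Lemma psd_outer n (w : 'cV[C]_n) : psd (w *m hadj w).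
Proof.
split; first by rewrite hadjM hadjK.
by move=> x; rewrite -/(qf _ x x) outer_form exprn_ge0.
Qed.

Lemma trace_form n (h : 'cV[C]_n) W : \tr ((h *m hadj h) *m W) = qf W h h.
Proof. by rewrite -mulmxA mxtrace_mulC trace_mx11. Qed.

Lemma cnorm2_tr n (w : 'cV[C]_n) : cnorm2 w = \tr (w *m hadj w).
Proof. by rewrite /cnorm2 mxtrace_mulC trace_mx11. Qed.

Lemma entryB m n (A B : 'M[C]_(m,n)) i j : (A - B) i j = A i j - B i j.
Proof. by rewrite !mxE. Qed.
Lemma entryD m n (A B : 'M[C]_(m,n)) i j : (A + B) i j = A i j + B i j.
Proof. by rewrite !mxE. Qed.
Lemma entryZ m n a (A : 'M[C]_(m,n)) i j : (a *: A) i j = a * A i j.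
Proof. by rewrite !mxE. Qed.

Lemma form_expand n (W : 'M[C]_n) (x h : 'cV[C]_n) (t : C) :
  qf W (x - t *: h) (x - t *: h) =
  qf W x x - t * qf W x h - conjc t * qf W h x + conjc t * t * qf W h h.
Proof.
rewrite /qf hadjB hadjZ !(mulmxBl, mulmxBr) -!scalemxAr -!scalemxAl -?scalemxAr.
rewrite !(entryB, entryZ). ring.
Qed.


Lemma qfB n (A B : 'M[C]_n) x : qf (A - B) x x = qf A x x - qf B x x.
Proof. by rewrite /qf mulmxBr mulmxBl entryB. Qed.
Lemma qfD n (A B : 'M[C]_n) x : qf (A + B) x x = qf A x x + qf B x x.
Proof. by rewrite /qf mulmxDr mulmxDl entryD. Qed.
Lemma qfZ n a (A : 'M[C]_n) x : qf (a *: A) x x = a * qf A x x.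
Proof. by rewrite /qf -scalemxAr -scalemxAl entryZ. Qed.
Lemma qf_sum n K (F : 'I_K -> 'M[C]_n) x : qf (\sum_k F k) x x = \sum_k qf (F k) x x.
Proof. by rewrite /qf mulmx_sumr mulmx_suml summxE. Qed.

Lemma conjcM (a b : C) : conjc (a * b) = conjc a * conjc b.
Proof. exact: rmorphM. Qed.

Lemma CS_psd n (W : 'M[C]_n) h : psd W -> 0 < qf W h h ->
  psd (W - (qf W h h)^-1 *: ((W *m h) *m hadj (W *m h))).
Proof.
move=> [HW Hp] cpos; set c := qf W h h.
have cc : conjc c = c by apply: conj_ge0; apply: ltW.
have cc' : conjc c^-1 = c^-1 by rewrite conjc_inv cc.
have c0 : c != 0 by rewrite gt_eqF.
split.
  by rewrite hadjB hadjZ cc' -(psd_outer (W *m h)).1 -HW.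
move=> x; rewrite -/(qf _ x x) qfB qfZ.
have -> : qf (W *m h *m hadj (W *m h)) x x = qf W x h * conjc (qf W x h).
  by rewrite outer_form sqr_normc /qf mulmxA.
set b := qf W x h.
have := Hp (x - (conjc b / c) *: h); rewrite -/(qf _ _ _) form_expand.
rewrite formJ // -/b conjcM formJ // cc' -/c.
set d := qf W h x.
by congr (0 <= _); field.
Qed.

Lemma sqrt_outer n (c : C) (y : 'cV[C]_n) : 0 <= c ->
  ((sqrtC c)^-1 *: y) *m hadj ((sqrtC c)^-1 *: y) = c^-1 *: (y *m hadj y).
Proof.
move=> c0; have s0 : 0 <= (sqrtC c)^-1 by rewrite invr_ge0 sqrtC_ge0.
rewrite hadjZ conj_ge0 // -scalemxAl -scalemxAr scalerA.
by rewrite -expr2 exprVn sqrtCK.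
Qed.

Lemma gain_qf n (h w : 'cV[C]_n) : `|(hadj h *m w) 0 0| ^+ 2 = qf (w *m hadj w) h h.
Proof. by rewrite outer_form. Qed.

Lemma ltC0 (a:R) : (0 < a%:C) = (0 < a). Proof. exact: ltcR. Qed.
Lemma leC0 (a:R) : (0 <= a%:C) = (0 <= a). Proof. exact: lecR. Qed.

Lemma psdD n (A B : 'M[C]_n) : psd A -> psd B -> psd (A + B).
Proof.
move=> [HA PA] [HB PB]; split; first by rewrite hadjD -HA -HB.
by move=> x; rewrite -/(qf _ x x) qfD addr_ge0 //; [apply: PA | apply: PB].
Qed.

Lemma psd_sum n K (F : 'I_K -> 'M[C]_n) : (forall k, psd (F k)) -> psd (\sum_k F k).
Proof.
move=> HF; split.
  by rewrite hadj_sum; apply: eq_bigr => k _; rewrite -(HF k).1.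
move=> x; rewrite -/(qf _ x x) qf_sum sumr_ge0 // => k _; exact: (HF k).2.
Qed.

Lemma trsum n K (F : 'I_K -> 'M[C]_n) : \tr (\sum_k F k) = \sum_k \tr (F k).
Proof. exact: raddf_sum. Qed.
End Help.


Theorem proposition8 (R : realType) (M N K : nat)
  (G : 'M[R[i]]_(N, M)) (hd : 'I_K -> 'cV[R[i]]_M) (hr : 'I_K -> 'cV[R[i]]_N)
  (Gam sig2 : 'I_K -> R) (P0 theta d lam : R) (v : 'cV[R[i]]_N)
  (HM : (0 < M)%N) (HN : (0 < N)%N) (HK : (0 < K)%N)
  (HGam : forall k, 0 < Gam k) (Hsig : forall k, 0 < sig2 k) (HP0 : 0 < P0)
  (Hd : 0 < d) (Hlam : 0 < lam)
  (Hv : forall n : 'I_N, `|v n 0| = 1)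
  (W : 'I_K -> 'M[R[i]]_M) (R0 : 'M[R[i]]_M) (u : R)
  (Hopt : optSDR G hd hr Gam sig2 P0 theta d lam v W R0 u) :
  (forall k, 0 < hWh G hd hr v W k) /\
  psd (R0opt G hd hr v W R0) /\
  optP42 G hd hr Gam sig2 P0 theta d lam v
    (wopt G hd hr v W) (R0opt G hd hr v W R0) u.
Proof.
case: Hopt => [[HWp [HR0 [HMm [Hs Hpow]]]] Hmax].
set h := hk G hd hr v.
have trH : forall k i, \tr (Hk G hd hr v k *m W i) = qf (W i) (h k) (h k).
  by move=> k i; rewrite /Hk trace_form.
have sT : forall k, \sum_(i < K | i != k) \tr (Hk G hd hr v k *m W i)
    = \sum_(i < K | i != k) qf (W i) (h k) (h k).
  by move=> k; apply: eq_bigr => i _; exact: trH.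
have cpos : forall k, 0 < qf (W k) (h k) (h k).
  move=> k; have := Hs k; rewrite trH sT => H.
  have Hs0 : 0 <= \sum_(i < K | i != k) qf (W i) (h k) (h k).
    by apply: sumr_ge0 => i _; exact: (HWp i).2.
  have H1 : (sig2 k)%:C <= (Gam k)^-1%:C * qf (W k) (h k) (h k).
    by apply: (le_trans H); rewrite lerBlDr lerDl.
  have H2 : 0 < (Gam k)^-1%:C * qf (W k) (h k) (h k).
    by apply: lt_le_trans H1; rewrite ltC0.
  by move: H2; rewrite pmulr_rgt0 // ltC0 invr_gt0.
set w := wopt G hd hr v W.
have Wout : forall k, w k *m hadj (w k) =
    (qf (W k) (h k) (h k))^-1 *: (W k *m h k *m hadj (W k *m h k)).
  by move=> k; apply: sqrt_outer; exact: ltW (cpos k).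
have Dpsd : forall k, psd (W k - w k *m hadj (w k)).
  by move=> k; rewrite Wout; apply: CS_psd => //; exact: cpos.
have R0E : R0opt G hd hr v W R0 = R0 + \sum_k (W k - w k *m hadj (w k)).
  by rewrite /R0opt sumrB addrA.
have R0psd : psd (R0opt G hd hr v W R0).
  by rewrite R0E; apply: psdD => //; apply: psd_sum.
have sumE : \sum_(k < K) w k *m hadj (w k) + R0opt G hd hr v W R0 = \sum_k W k + R0.
  by rewrite /R0opt addrC subrK addrC.
have gle : forall k i, gain G hd hr v k (w i) <= qf (W i) (h k) (h k).
  move=> k i; rewrite /gain gain_qf -subr_ge0 -qfB; exact: (Dpsd i).2.
have geq : forall k, gain G hd hr v k (w k) = qf (W k) (h k) (h k).
  move=> k; rewrite /gain gain_qf Wout qfZ outer_form -/h mulmxA -/(qf _ _ _).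
  have c0 := cpos k; rewrite ger0_norm ?ltW //.
  by rewrite expr2 mulKf // lt0r_neq0.
split; first by move=> k; exact: cpos.
split; first exact: R0psd.
split.
  split; first exact: R0psd.
  split; first by rewrite sumE.
  split.
    move=> k; rewrite /sinrII.
    set S := \sum_(i < K | i != k) _.
    have S0 : 0 <= S by apply: sumr_ge0 => i _; rewrite /gain exprn_ge0.
    have Dp : 0 < S + (sig2 k)%:C by apply: ltr_wpDl; rewrite ?ltC0.
    rewrite ler_pdivlMr // geq.
    have H := Hs k; rewrite trH sT lerBrDr in H.
    have Gp : 0 < (Gam k)%:C by rewrite ltC0.
    rewrite -[X in _ <= X](mulVKf (lt0r_neq0 Gp)) -fmorphV ler_pM2l //.
    apply: le_trans H; rewrite addrC lerD2l.
    by apply: ler_sum => i _; apply: gle.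
  rewrite (eq_bigr _ (fun k _ => cnorm2_tr (w k))) -trsum -mxtraceD sumE.
  by rewrite mxtraceD trsum.
move=> w' R0' u' [HR0' [HM' [Hs' Hp']]].
apply: (Hmax (fun k => w' k *m hadj (w' k)) R0' u').
split; first by move=> k; apply: psd_outer.
split; first exact: HR0'.
split; first exact: HM'.
split.
  move=> k; rewrite /Hk trace_form -gain_qf.
  rewrite (eq_bigr (fun i => gain G hd hr v k (w' i))); last first.
    by move=> i _; rewrite trace_form -gain_qf.
  have := Hs' k; rewrite /sinrII.
  set S := \sum_(i < K | i != k) _.
  have S0 : 0 <= S by apply: sumr_ge0 => i _; rewrite /gain exprn_ge0.
  have Dp : 0 < S + (sig2 k)%:C by apply: ltr_wpDl; rewrite ?ltC0.
  rewrite ler_pdivlMr // => H.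
  have Gp : 0 < ((Gam k)^-1)%:C by rewrite ltC0 invr_gt0.
  rewrite lerBrDr addrC -(ler_pM2l Gp) in H *.
  apply: le_trans H; rewrite fmorphV mulrA mulVf ?mul1r //.
  by apply: lt0r_neq0; rewrite (ltC0 (Gam k)).
by rewrite -(eq_bigr _ (fun k _ => cnorm2_tr (w' k))).
Qed.
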